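(* Let $R$ be a local ring and $s\in R$ a central element. The following are equivalent: (1) every $A\in M_2(R;s)$ with $A\notin U\big(M_2(R;s)\big)$ and $I_2-A\notin U\big(M_2(R;s)\big)$ is strongly nil clean; (2) every $A\in M_2(R;s)$ with $A\notin U\big(M_2(R;s)\big)$ and $I_2-A\notin U\big(M_2(R;s)\big)$ is strongly $J$-clean, and $J(R)$ is nil.
   Context: All rings are associative with identity. A ring $R$ is local if $R/J(R)$ is a division ring, where $J(R)$ is the Jacobson radical; $U(T)$ is the group of units and $Nil(T)$ the set of nilpotent elements of a ring $T$; $J(R)$ is nil if every element of it is nilpotent. For a ring $R$ and a central element $s\in R$, $M_2(R;s)$ denotes the ring whose elements are the $2\times 2$ arrays $\left[\begin{smallmatrix} a&b\\ c&d\end{smallmatrix}\right]$ with $a,b,c,d\in R$, with componentwise addition and multiplication $\left[\begin{smallmatrix} a&b\\ c&d\end{smallmatrix}\right]\left[\begin{smallmatrix} a'&b'\\ c'&d'\end{smallmatrix}\right]=\left[\begin{smallmatrix} aa'+s^2bc'&ab'+bd'\\ ca'+dc'&s^2cb'+dd'\end{smallmatrix}\right]$, with identity $I_2$. An element $a$ of a ring $T$ is strongly nil clean if there is an idempotent $e\in T$ with $ae=ea$ and $a-e\in Nil(T)$; it is strongly $J$-clean if there is an idempotent $e\in T$ with $ae=ea$ and $a-e\in J(T)$. *)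

(* Defs.v *)
From HB Require Import structures.
From mathcomp Require Import all_boot all_order all_algebra.
Set Implicit Arguments. Unset Strict Implicit. Unset Printing Implicit Defensive.
Import GRing.Theory.
Local Open Scope ring_scope.

Section Base.
Variable R : unitRingType.

Definition inJ (x : R) : Prop := forall y : R, (1 - y * x) \is a GRing.unit.

Definition nilpotent (x : R) : Prop := exists n : nat, x ^+ n = 0.

Definition J_nil : Prop := forall x : R, inJ x -> nilpotent x.

(* R/J(R) is a division ring: it is nonzero (1 notin J) and every class
   x + J(R) with x notin J(R) has a two-sided inverse modulo J(R). *)
Definition local_ring : Prop :=
  ~ inJ 1 /\
  forall x : R, ~ inJ x -> exists y : R, inJ (x * y - 1) /\ inJ (y * x - 1).

Definition central (s : R) : Prop := forall x : R, s * x = x * s.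
End Base.

Record M2s (R : Type) := mkM2 { m11 : R; m12 : R; m21 : R; m22 : R }.

Section M2.
Variables (R : unitRingType) (s : R).

Definition M2zero : M2s R := mkM2 0 0 0 0.
Definition M2one : M2s R := mkM2 1 0 0 1.
Definition M2add (A B : M2s R) : M2s R :=
  mkM2 (m11 A + m11 B) (m12 A + m12 B) (m21 A + m21 B) (m22 A + m22 B).
Definition M2opp (A : M2s R) : M2s R :=
  mkM2 (- m11 A) (- m12 A) (- m21 A) (- m22 A).
Definition M2sub (A B : M2s R) : M2s R := M2add A (M2opp B).

Definition M2mul (A B : M2s R) : M2s R :=
  mkM2 (m11 A * m11 B + s ^+ 2 * m12 A * m21 B)
       (m11 A * m12 B + m12 A * m22 B)
       (m21 A * m11 B + m22 A * m21 B)
       (s ^+ 2 * m21 A * m12 B + m22 A * m22 B).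

Definition M2pow (A : M2s R) (n : nat) : M2s R := iter n (M2mul A) M2one.

Definition M2unit (A : M2s R) : Prop :=
  exists B : M2s R, M2mul A B = M2one /\ M2mul B A = M2one.

Definition M2nilpotent (A : M2s R) : Prop := exists n : nat, M2pow A n = M2zero.

Definition M2idempotent (E : M2s R) : Prop := M2mul E E = E.

Definition M2inJ (A : M2s R) : Prop :=
  forall B : M2s R, M2unit (M2sub M2one (M2mul B A)).

Definition strongly_nil_clean (A : M2s R) : Prop :=
  exists E : M2s R, M2idempotent E /\ M2mul A E = M2mul E A /\
                    M2nilpotent (M2sub A E).

Definition strongly_J_clean (A : M2s R) : Prop :=
  exists E : M2s R, M2idempotent E /\ M2mul A E = M2mul E A /\
                    M2inJ (M2sub A E).
End M2.

(* Main.v *)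
From HB Require Import structures.
Require Import Defs.
From mathcomp Require Import all_boot all_order all_algebra.
From Stdlib Require Import Classical.
Set Implicit Arguments. Unset Strict Implicit. Unset Printing Implicit Defensive.
Import GRing.Theory.
Local Open Scope ring_scope.

Section Gen.
Variable V : pzRingType.
Definition uni (x : V) := exists y, x * y = 1 /\ y * x = 1.
Definition JJ (x : V) := forall y, uni (1 - y * x).

Lemma uni1 : uni 1. Proof. by exists 1; rewrite mulr1. Qed.
Lemma uniM x y : uni x -> uni y -> uni (x * y).
Proof.
move=> [x' [h1 h2]] [y' [h3 h4]]; exists (y' * x'); split.
  by rewrite mulrA -(mulrA x) h3 mulr1 h1.
by rewrite mulrA -(mulrA y') h2 mulr1 h4.
Qed.
Lemma uni_idem e : e * e = e -> uni e -> e = 1.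
Proof. move=> he [y [h1 _]]; have : e * (e * y) = e * y by rewrite mulrA he. by rewrite h1 mulr1. Qed.
Lemma uni_swap a b : uni (1 - a * b) -> uni (1 - b * a).
Proof.
move=> [y [h1 h2]]; exists (1 + b * y * a); split.
  have e : b * y * a - b * a * (b * y * a) = b * a.
    have -> : b * a * (b * y * a) = b * (a * b) * y * a by rewrite !mulrA.
    by rewrite -mulrBl -mulrBl -{1}(mulr1 b) -mulrBr -(mulrA b (1 - a * b) y) h1 mulr1.
  by rewrite mulrDr mulr1 mulrBl mul1r e subrK.
have e : b * y * a - b * y * a * (b * a) = b * a.
  have -> : b * y * a * (b * a) = b * (y * (a * b)) * a by rewrite !mulrA.
  by rewrite -mulrBl -mulrBr -{1}(mulr1 y) -mulrBr h2 mulr1.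
by rewrite mulrDl mul1r mulrBr mulr1 e subrK.
Qed.
Lemma uni_nil x n : x ^+ n = 0 -> uni (1 - x).
Proof.
move=> hx; exists (\sum_(i < n) x ^+ i).
have h : (1 - x) * (\sum_(i < n) x ^+ i) = 1.
  by rewrite -opprB mulNr -subrX1 hx sub0r opprK.
split=> //.
have hc : GRing.comm (1 - x) (\sum_(i < n) x ^+ i).
  apply: commr_sum => i _; apply: commrX.
  by rewrite /GRing.comm mulrBl mulrBr mul1r mulr1.
by rewrite -hc.
Qed.
Lemma JJ_uni x : JJ x -> uni (1 + x).
Proof. by move=> /(_ (-1)); rewrite mulN1r opprK. Qed.
Lemma JJ_uni' x : JJ x -> uni (1 - x).
Proof. by move=> /(_ 1); rewrite mul1r. Qed.
Lemma JJ_mull x z : JJ x -> JJ (z * x).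
Proof. by move=> h y; rewrite mulrA. Qed.
Lemma JJ_mulr x z : JJ x -> JJ (x * z).
Proof. by move=> h y; rewrite mulrA; apply: uni_swap; rewrite mulrA; apply: h. Qed.
Lemma JJ_add x z : JJ x -> JJ z -> JJ (x + z).
Proof.
move=> hx hz y; have [u [h1 h2]] := hx y.
have -> : 1 - y * (x + z) = (1 - y * x) * (1 - (u * y) * z).
  by rewrite mulrBr mulr1 !mulrA h1 mul1r mulrDr opprD addrA.
by apply: uniM; [exists u | apply: hz].
Qed.
Lemma JJ0 : JJ 0. Proof. by move=> y; rewrite mulr0 subr0; exact: uni1. Qed.
Lemma JJN x : JJ x -> JJ (- x).
Proof. by move=> h; rewrite -mulN1r; apply: JJ_mull. Qed.
End Gen.

Section Loc.
Variables (R : unitRingType) (hl : local_ring R).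

Lemma uniP (x : R) : uni x <-> x \is a GRing.unit.
Proof.
split; first by move=> [y [h1 h2]]; apply/unitrP; exists y.
by move/unitrP=> [y [h1 h2]]; exists y.
Qed.

Lemma inJ_JJ (x : R) : inJ x <-> JJ x.
Proof. by split=> h y; [apply/uniP | apply/uniP]. Qed.

Lemma unit_two (x l r : R) : l * x = 1 -> x * r = 1 -> x \is a GRing.unit.
Proof.
move=> hl' hr; apply/unitrP; exists l; split => //.
have -> : l = r by rewrite -(mulr1 l) -hr mulrA hl' mul1r.
by [].
Qed.

Lemma J_nu (x : R) : inJ x -> ~ x \is a GRing.unit.
Proof.
move=> h hu; have := h x^-1; rewrite mulVr // subrr => /uniP [y [h1 _]].
by move: h1; rewrite mul0r => /eqP; rewrite eq_sym oner_eq0.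
Qed.

Lemma J1 (x : R) : inJ x -> (1 + x) \is a GRing.unit.
Proof. by move=> /(_ (-1)); rewrite mulN1r opprK. Qed.

Lemma nu_J (x : R) : ~ x \is a GRing.unit -> inJ x.
Proof.
move=> hx; apply: NNPP => hJ; apply: hx.
have [y [h1 h2]] := hl.2 x hJ.
have u1 := J1 h1; have u2 := J1 h2.
rewrite addrC subrK in u1; rewrite addrC subrK in u2.
apply: (@unit_two x ((y * x)^-1 * y) (y * (x * y)^-1)).
  by rewrite -mulrA mulVr.
by rewrite mulrA mulrV.
Qed.

Definition nu (x : R) := ~ x \is a GRing.unit.

Lemma nu_add x y : nu x -> nu y -> nu (x + y).
Proof.
move=> hx hy; apply: J_nu; apply/inJ_JJ; apply: JJ_add; apply/inJ_JJ; exact: nu_J.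
Qed.
Lemma nu_mull x y : nu x -> nu (y * x).
Proof. move=> hx; apply: J_nu; apply/inJ_JJ; apply: JJ_mull; apply/inJ_JJ; exact: nu_J. Qed.
Lemma nu_mulr x y : nu x -> nu (x * y).
Proof. move=> hx; apply: J_nu; apply/inJ_JJ; apply: JJ_mulr; apply/inJ_JJ; exact: nu_J. Qed.
Lemma nu_opp x : nu x -> nu (- x).
Proof. by move=> hx; rewrite -mulN1r; apply: nu_mull. Qed.
Lemma nu0 : nu 0. Proof. by rewrite /nu unitr0. Qed.
Lemma nu_1sub x : nu x -> (1 - x) \is a GRing.unit.
Proof. by move=> /nu_J /(_ 1); rewrite mul1r. Qed.
Lemma nu_sub_unit d x : d \is a GRing.unit -> nu x -> (d - x) \is a GRing.unit.
Proof.
move=> hd hx; have -> : d - x = d * (1 - d^-1 * x) by rewrite mulrBr mulr1 mulrA mulrV // mul1r.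
by rewrite unitrMr //; apply: nu_1sub; apply: nu_mull.
Qed.
Lemma unit_or_1sub (x : R) : x \is a GRing.unit \/ (1 - x) \is a GRing.unit.
Proof. by case: (classic (x \is a GRing.unit)) => h; [left | right; apply: nu_1sub]. Qed.
Lemma idem01 (e : R) : e * e = e -> e = 0 \/ e = 1.
Proof.
move=> he; case: (unit_or_1sub e) => h.
  by right; apply: (mulrI h); rewrite he mulr1.
by left; apply: (mulIr h); rewrite mulrBr mulr1 he subrr mul0r.
Qed.
Lemma nil_nu (x : R) n : x ^+ n = 0 -> nu x.
Proof. by move=> hx hu; have := unitrX n hu; rewrite hx unitr0. Qed.
End Loc.

Section Mat.
Variables (R : unitRingType) (s : R) (hs : central s).

Definition TT (h : central s) : Type := M2s R.
Local Notation T := (TT hs).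

Definition m2tup (A : T) : R * R * R * R := (m11 A, m12 A, m21 A, m22 A).
Definition tup2m (x : R * R * R * R) : T :=
  let: (a, b, c, d) := x in mkM2 a b c d.
Lemma m2tupK : cancel m2tup tup2m. Proof. by case. Qed.
HB.instance Definition _ := Equality.copy T (can_type m2tupK).
HB.instance Definition _ := Choice.copy T (can_type m2tupK).

Lemma s2C x : x * s ^+ 2 = s ^+ 2 * x.
Proof. by rewrite expr2 mulrA -hs -mulrA -hs mulrA. Qed.

Lemma M2mulA : associative (M2mul s : T -> T -> T).
Proof.
case=> a b c d [a' b' c' d'] [a'' b'' c'' d'']; rewrite /M2mul /=.
congr mkM2; rewrite !(mulrDl, mulrDr, mulrA, s2C); rewrite -!addrA; congr (_ + _);
  rewrite addrC -!addrA; congr (_ + _); by rewrite addrC.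
Qed.
Lemma M2addA : associative (@M2add R : T -> T -> T).
Proof. by case=> a b c d [a' b' c' d'] [a'' b'' c'' d'']; rewrite /M2add /= !addrA. Qed.
Lemma M2addC : commutative (@M2add R : T -> T -> T).
Proof. by case=> a b c d [a' b' c' d']; rewrite /M2add /= (addrC a) (addrC b) (addrC c) (addrC d). Qed.
Lemma M2add0 : left_id (M2zero R : T) (@M2add R).
Proof. by case=> a b c d; rewrite /M2add /= !add0r. Qed.
Lemma M2addN : left_inverse (M2zero R : T) (@M2opp R) (@M2add R).
Proof. by case=> a b c d; rewrite /M2add /= !addNr. Qed.
Lemma M2mul1 : left_id (M2one R : T) (M2mul s).
Proof. by case=> a b c d; rewrite /M2mul /= !(mul1r, mul0r, mulr0, addr0, add0r). Qed.
Lemma M2mulr1 : right_id (M2one R : T) (M2mul s).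
Proof. by case=> a b c d; rewrite /M2mul /= !(mulr1, mul0r, mulr0, addr0, add0r). Qed.
Lemma M2mulDl : left_distributive (M2mul s : T -> T -> T) (@M2add R).
Proof.
case=> a b c d [a' b' c' d'] [a'' b'' c'' d'']; rewrite /M2mul /M2add /=.
by congr mkM2; rewrite !(mulrDl, mulrDr) -!addrA; congr (_ + _); rewrite addrCA.
Qed.
Lemma M2mulDr : right_distributive (M2mul s : T -> T -> T) (@M2add R).
Proof.
case=> a b c d [a' b' c' d'] [a'' b'' c'' d'']; rewrite /M2mul /M2add /=.
by congr mkM2; rewrite !(mulrDl, mulrDr) -!addrA; congr (_ + _); rewrite addrCA.
Qed.
Lemma M2one_neq0 : (M2one R : T) != M2zero R.
Proof. by apply/eqP => -[] /eqP; rewrite oner_eq0. Qed.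

HB.instance Definition _ := GRing.isNzRing.Build T M2addA M2addC M2add0 M2addN
  M2mulA M2mul1 M2mulr1 M2mulDl M2mulDr M2one_neq0.

Lemma mulTE (A B : T) : A * B = M2mul s A B. Proof. by []. Qed.
Lemma addTE (A B : T) : A + B = M2add A B. Proof. by []. Qed.
Lemma oppTE (A : T) : - A = M2opp A. Proof. by []. Qed.
Lemma oneTE : (1 : T) = M2one R. Proof. by []. Qed.
Lemma zeroTE : (0 : T) = M2zero R. Proof. by []. Qed.
End Mat.

Section M2.
Variables (R : unitRingType) (s : R) (hs : central s) (hl : local_ring R).
Local Notation T := (TT hs).

Ltac m2s := rewrite ?mulTE ?addTE ?oppTE ?oneTE ?zeroTE /M2mul /M2add /M2opp /M2one /M2zero /=.
Ltac rsimp := rewrite ?(mulr0, mul0r, mulr1, mul1r, addr0, add0r, oppr0, subr0, sub0r, subrr, opprK).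

Lemma unit_crit (a b c d : R) : a \is a GRing.unit -> d \is a GRing.unit ->
  nu (s ^+ 2 * c * a^-1 * b) -> uni (mkM2 a b c d : T).
Proof.
move=> ha hd hn.
set del := d - s ^+ 2 * c * a^-1 * b.
have hdel : del \is a GRing.unit by apply: nu_sub_unit.
have -> : (mkM2 a b c d : T) =
   (mkM2 1 0 (c * a^-1) 1 : T) * (mkM2 a 0 0 del : T) * (mkM2 1 (a^-1 * b) 0 1 : T).
  m2s; rsimp; rewrite mulrA mulrV // mul1r divrK //; congr mkM2.
  by rewrite /del !mulrA addrC subrK.
apply: uniM; first apply: uniM.
- exists (mkM2 1 0 (- (c * a^-1)) 1 : T); split; m2s; rsimp; by rewrite ?addNr ?addrN.
- exists (mkM2 a^-1 0 0 del^-1 : T); split; m2s; rsimp; by rewrite ?mulrV ?mulVr.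
- exists (mkM2 1 (- (a^-1 * b)) 0 1 : T); split; m2s; rsimp; by rewrite ?addNr ?addrN.
Qed.
Definition e1 : T := mkM2 1 0 0 0.
Definition e2 : T := mkM2 0 0 0 1.

Lemma diag_uni (a d : R) : uni (mkM2 a 0 0 d : T) -> a \is a GRing.unit.
Proof.
case=> -[y1 y2 y3 y4] []; m2s; rsimp; case=> h1 _ _ _ [h2 _ _ _].
exact: (unit_two h2 h1).
Qed.

Lemma JJ_e1 (r : R) : inJ r -> JJ (mkM2 r 0 0 0 : T).
Proof.
move=> hr -[b1 b2 b3 b4]; m2s; rsimp.
apply: unit_crit; rewrite ?unitr1 ?mulr0 //; last exact: nu0.
Qed.

Lemma JJ_e1' (r : R) : JJ (mkM2 r 0 0 0 : T) -> inJ r.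
Proof.
move=> h y; have := h (mkM2 y 0 0 0 : T); m2s; rsimp; exact: diag_uni.
Qed.

Lemma pow_e1 (r : R) n : (mkM2 r 0 0 0 : T) ^+ n.+1 = mkM2 (r ^+ n.+1) 0 0 0.
Proof.
elim: n => [|n IH]; first by rewrite !expr1.
by rewrite exprS IH; m2s; rsimp; rewrite -exprS.
Qed.

Lemma e1_comp (M : T) : e1 * M * e1 = mkM2 (m11 M) 0 0 0.
Proof. by case: M => a b c d; rewrite /e1; m2s; rsimp. Qed.
Lemma e1_idem : e1 * e1 = e1. Proof. by rewrite /e1; m2s; rsimp. Qed.

Lemma corner1 (E : T) : E * E = E -> E <> 1 -> m11 E \is a GRing.unit ->
  exists u v : T, (v * u = e1 /\ u * v = E) /\ [/\ u * e1 = u, e1 * v = v,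
                      E * u = u & v * E = v].
Proof.
case: E => e f g h hE hE1 /= he.
set E : T := mkM2 e f g h.
set P : T := mkM2 (m11 E)^-1 0 0 0.
exists (E * e1), (P * E).
have hPe : e1 * P = P by rewrite /P /e1; m2s; rsimp.
have vu : P * E * (E * e1) = e1.
  rewrite -mulrA (mulrA E) hE /P /e1 /E; m2s; rsimp; by rewrite mulVr.
have hu : E * e1 * e1 = E * e1 by rewrite -mulrA e1_idem.
have hv1 : e1 * (P * E) = P * E by rewrite mulrA hPe.
have hEu : E * (E * e1) = E * e1 by rewrite mulrA hE.
have hvE : P * E * E = P * E by rewrite -mulrA hE.
split; last by split.
split => //.
set Q := E * e1 * (P * E).
have hQQ : Q * Q = Q.
  by rewrite /Q mulrA -(mulrA (E * e1) (P * E) (E * e1)) vu hu.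
have hEQ : E * Q = Q by rewrite /Q !mulrA hE.
have hQE : Q * E = Q by rewrite /Q -!mulrA hE.
set K := E - Q.
have hKK : K * K = K.
  by rewrite /K mulrBl !mulrBr hE hEQ hQE hQQ subrr subr0.
have hQK : Q * K = 0 by rewrite /K mulrBr hQE hQQ subrr.
have hKQ : K * Q = 0 by rewrite /K mulrBl hEQ hQQ subrr.
apply/eqP; rewrite -subr_eq0 -/Q -opprB oppr_eq0 -/K; apply/eqP.
move: hKK hQK hKQ hE hE1; rewrite /K /Q /P /e1 /E.
m2s; rsimp => hKK hQK hKQ hE hE1.
rewrite !(mulVr he, mulVKr he, mulr1, subrr) in hKK hQK hKQ * ; rsimp. move: hKK hQK hKQ; rsimp. set k := h - _.
move=> [hk] [h12 _] [h21 _].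
case: (idem01 hl hk) => k01; first by rewrite k01.
exfalso; rewrite k01 in h12 h21; rewrite mulr1 in h12; rewrite mul1r in h21.
move: hE; rewrite h12 h21; rsimp; move=> [hee] *.
have e1' : e = 1 by apply: (mulrI he); rewrite hee mulr1.
apply: hE1; rewrite e1'; congr mkM2 => //.
by move: k01; rewrite /k h21; rsimp.
Qed.
Lemma powE (E X : T) k : E * X = X -> X * E = X ->
  E * X ^+ k.+1 = X ^+ k.+1 /\ X ^+ k.+1 * E = X ^+ k.+1.
Proof. by move=> h1 h2; rewrite exprS mulrA h1 -exprS exprSr -mulrA h2 -exprSr. Qed.

Lemma corner_setup (E X : T) : E * E = E -> E <> 1 -> m11 E \is a GRing.unit ->
  E * X = X -> X * E = X ->
  exists u v : T, exists r : R,
    [/\ u * v = E, v * X * u = mkM2 r 0 0 0, X = u * (v * X * u) * v &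
        forall n, (v * X * u) ^+ n.+1 = v * X ^+ n.+1 * u].
Proof.
move=> hE hE1 he h1 h2.
have [u [v [[vu uv] [hu hv hEu hvE]]]] := corner1 hE hE1 he.
exists u, v, (m11 (v * X * u)); split => //.
- by rewrite -e1_comp !mulrA hv -(mulrA _ u e1) hu.
- by rewrite !mulrA uv h1 -mulrA uv h2.
elim=> [|n IH]; first by rewrite !expr1.
rewrite exprS IH !mulrA -(mulrA _ u v) uv -(mulrA _ E) (proj1 (powE n h1 h2)).
by rewrite -(mulrA v X) -exprS.
Qed.

Lemma corner_nilJ (E X : T) n : E * E = E -> E <> 1 -> m11 E \is a GRing.unit ->
  E * X = X -> X * E = X -> X ^+ n = 0 -> JJ X.
Proof.
move=> hE hE1 he h1 h2 hn.
have [u [v [r [uv hr hX hp]]]] := corner_setup hE hE1 he h1 h2.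
have hn1 : X ^+ n.+1 = 0 by rewrite exprSr hn mul0r.
have := hp n; rewrite hn1 mulr0 mul0r hr pow_e1 => -[hrn].
have hJ : JJ (mkM2 r 0 0 0 : T).
  by apply: JJ_e1; apply: (nu_J hl); exact: nil_nu hrn.
by rewrite hX; apply: JJ_mulr; apply: JJ_mull; rewrite -hr in hJ.
Qed.

Lemma corner_Jnil (E X : T) : E * E = E -> E <> 1 -> m11 E \is a GRing.unit ->
  E * X = X -> X * E = X -> JJ X -> J_nil R -> exists n, X ^+ n = 0.
Proof.
move=> hE hE1 he h1 h2 hJ hN.
have [u [v [r [uv hr hX hp]]]] := corner_setup hE hE1 he h1 h2.
have hJ' : JJ (v * X * u) by apply: JJ_mulr; apply: JJ_mull.
rewrite hr in hJ'; have [n hn] := hN r (JJ_e1' hJ').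
exists n.+1.
have hz : (v * X * u) ^+ n.+1 = 0 by rewrite hr pow_e1 exprS hn mulr0.
have [hE1' hE2'] := powE n h1 h2.
rewrite hp in hz.
have : u * (v * X ^+ n.+1 * u) * v = X ^+ n.+1.
  by rewrite !mulrA uv -(mulrA (E * X ^+ n.+1) u v) uv hE1' hE2'.
by rewrite hz mulr0 mul0r => <-.
Qed.
Definition sw (A : T) : T := mkM2 (m22 A) (m21 A) (m12 A) (m11 A).
Lemma swM (A B : T) : sw (A * B) = sw A * sw B.
Proof. by case: A B => a b c d [a' b' c' d']; rewrite /sw; m2s; congr mkM2; rewrite addrC. Qed.
Lemma swD (A B : T) : sw (A + B) = sw A + sw B. Proof. by case: A B => a b c d [a' b' c' d']. Qed.
Lemma swN (A : T) : sw (- A) = - sw A. Proof. by case: A. Qed.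
Lemma sw1 : sw 1 = 1. Proof. by []. Qed.
Lemma sw0 : sw 0 = 0. Proof. by []. Qed.
Lemma swK (A : T) : sw (sw A) = A. Proof. by case: A. Qed.
Lemma swX (A : T) n : sw (A ^+ n) = sw A ^+ n.
Proof. by elim: n => [|n IH]; rewrite ?expr0 // !exprS swM IH. Qed.
Lemma sw_uni (A : T) : uni A -> uni (sw A).
Proof. by move=> [B [h1 h2]]; exists (sw B); rewrite -!swM h1 h2. Qed.
Lemma sw_JJ (A : T) : JJ A -> JJ (sw A).
Proof.
move=> h B; have -> : 1 - B * sw A = sw (1 - sw B * A) by rewrite swD swN swM swK.
exact/sw_uni/h.
Qed.

Lemma nontriv (E : T) : E * E = E -> E <> 0 -> E <> 1 ->
  m11 E \is a GRing.unit \/ m22 E \is a GRing.unit.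
Proof.
case: E => e f g h hE hE0 hE1 /=.
case: (classic (e \is a GRing.unit)) => he; first by left.
case: (classic (h \is a GRing.unit)) => hh; first by right.
exfalso.
have hf : nu f.
  move=> hf; move: hE; m2s => -[_ h12 _ _].
  have : f^-1 * e * f + h = 1.
    by rewrite -mulrA -(mulKr hf h) -mulrDr h12 mulVr.
  move=> h1; have : nu (f^-1 * e * f + h).
    by apply: (nu_add hl) => //; apply: (nu_mulr hl); apply: (nu_mull hl).
  by rewrite h1 /nu unitr1.
have hu : uni (1 - (mkM2 e f g h : T)).
  m2s; rsimp; apply: unit_crit; rewrite ?(nu_1sub hl) //.
  by apply: (nu_mull hl); apply: (nu_opp hl).
have hid : (1 - (mkM2 e f g h : T)) * (1 - (mkM2 e f g h : T)) = 1 - (mkM2 e f g h : T).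
  by rewrite mulrBl !mulrBr !mul1r !mulr1 hE subrr subr0.
apply: hE0; have := uni_idem hid hu.
by move/eqP; rewrite subr_eq addrC -subr_eq subrr => /eqP <-.
Qed.
Lemma sw_setup (E X : T) : E * E = E -> E <> 1 -> E * X = X -> X * E = X ->
  [/\ sw E * sw E = sw E, sw E <> 1, sw E * sw X = sw X & sw X * sw E = sw X].
Proof.
move=> hE hE1 h1 h2; split; rewrite -?swM ?hE ?h1 ?h2 //.
by move=> h; apply: hE1; rewrite -(swK E) h.
Qed.

Lemma gen_nilJ (E X : T) n : E * E = E -> E <> 0 -> E <> 1 ->
  E * X = X -> X * E = X -> X ^+ n = 0 -> JJ X.
Proof.
move=> hE hE0 hE1 h1 h2 hn.
case: (nontriv hE hE0 hE1) => hu; first exact: corner_nilJ hE hE1 hu h1 h2 hn.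
have [a b c d] := sw_setup hE hE1 h1 h2.
rewrite -(swK X); apply: sw_JJ.
by apply: (corner_nilJ a b hu c d (n := n)); rewrite -swX hn.
Qed.

Lemma gen_Jnil (E X : T) : E * E = E -> E <> 0 -> E <> 1 ->
  E * X = X -> X * E = X -> JJ X -> J_nil R -> exists n, X ^+ n = 0.
Proof.
move=> hE hE0 hE1 h1 h2 hJ hN.
case: (nontriv hE hE0 hE1) => hu; first exact: corner_Jnil hE hE1 hu h1 h2 hJ hN.
have [a b c d] := sw_setup hE hE1 h1 h2.
have [n hn] := corner_Jnil a b hu c d (sw_JJ hJ) hN.
by exists n; rewrite -(swK (X ^+ n)) swX hn.
Qed.

Lemma idemX (E : T) k : E * E = E -> E ^+ k.+1 = E.
Proof. by move=> hE; elim: k => [|k IH]; rewrite ?expr1 // exprS IH hE. Qed.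

Lemma split_setup (E W : T) : E * E = E -> E <> 0 -> E <> 1 -> W * E = E * W ->
  [/\ (1 - E) * (1 - E) = 1 - E, 1 - E <> 0, 1 - E <> 1, W * (1 - E) = (1 - E) * W &
     forall k, W ^+ k.+1 = (E * W) ^+ k.+1 + ((1 - E) * W) ^+ k.+1].
Proof.
move=> hE hE0 hE1 hc; split.
- by rewrite mulrBl !mulrBr !mul1r !mulr1 hE subrr subr0.
- by move/eqP; rewrite subr_eq0 => /eqP h; apply: hE1.
- by move/eqP; rewrite subr_eq addrC -subr_eq subrr => /eqP h; apply: hE0.
- by rewrite mulrBr mulrBl mulr1 mul1r hc.
move=> k; have hF : (1 - E) * (1 - E) = 1 - E by rewrite mulrBl !mulrBr !mul1r !mulr1 hE subrr subr0.
have hc' : W * (1 - E) = (1 - E) * W by rewrite mulrBr mulrBl mulr1 mul1r hc.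
have cE : GRing.comm E W by rewrite /GRing.comm hc.
have cF : GRing.comm (1 - E) W by rewrite /GRing.comm hc'.
by rewrite (exprMn_comm _ cE) (exprMn_comm _ cF) (idemX k hE) (idemX k hF) -mulrDl addrC subrK mul1r.
Qed.

Lemma W_nilJ (E W : T) n : E * E = E -> E <> 0 -> E <> 1 -> W * E = E * W ->
  W ^+ n = 0 -> JJ W.
Proof.
move=> hE hE0 hE1 hc hn.
have [hF hF0 hF1 hc' hsplit] := split_setup hE hE0 hE1 hc.
have hn1 : W ^+ n.+1 = 0 by rewrite exprSr hn mul0r.
have hX : JJ (E * W).
  have cE : GRing.comm E W by rewrite /GRing.comm hc.
  apply: (gen_nilJ hE hE0 hE1 (n := n.+1)).
  - by rewrite mulrA hE.
  - by rewrite -mulrA hc mulrA hE.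
  - by rewrite (exprMn_comm _ cE) hn1 mulr0.
have hY : JJ ((1 - E) * W).
  have cF : GRing.comm (1 - E) W by rewrite /GRing.comm hc'.
  apply: (gen_nilJ hF hF0 hF1 (n := n.+1)).
  - by rewrite mulrA hF.
  - by rewrite -mulrA hc' mulrA hF.
  - by rewrite (exprMn_comm _ cF) hn1 mulr0.
have := JJ_add hX hY; by rewrite -mulrDl addrC subrK mul1r.
Qed.

Lemma W_Jnil (E W : T) : E * E = E -> E <> 0 -> E <> 1 -> W * E = E * W ->
  JJ W -> J_nil R -> exists n, W ^+ n = 0.
Proof.
move=> hE hE0 hE1 hc hJ hN.
have [hF hF0 hF1 hc' hsplit] := split_setup hE hE0 hE1 hc.
have [n hn] : exists n, (E * W) ^+ n = 0.
  apply: (gen_Jnil hE hE0 hE1) => //; last exact: JJ_mull.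
  - by rewrite mulrA hE.
  - by rewrite -mulrA hc mulrA hE.
have [m hm] : exists n, ((1 - E) * W) ^+ n = 0.
  apply: (gen_Jnil hF hF0 hF1) => //; last exact: JJ_mull.
  - by rewrite mulrA hF.
  - by rewrite -mulrA hc' mulrA hF.
have z1 : (E * W) ^+ (n + m).+1 = 0 by rewrite -addnS exprD hn mul0r.
have z2 : ((1 - E) * W) ^+ (n + m).+1 = 0 by rewrite -addSn addnC exprD hm mul0r.
by exists (n + m).+1; rewrite hsplit z1 z2 addr0.
Qed.
Lemma powTE (A : T) n : M2pow s A n = A ^+ n.
Proof. by elim: n => [|n IH]; rewrite ?expr0 // exprS /= IH. Qed.

Lemma diagX (a d : R) n : (mkM2 a 0 0 d : T) ^+ n = mkM2 (a ^+ n) 0 0 (d ^+ n).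
Proof.
elim: n => [|n IH]; first by rewrite !expr0.
by rewrite exprS IH; m2s; rsimp; rewrite -!exprS.
Qed.

Lemma comm_sub (A E : T) : E * E = E -> A * E = E * A -> (A - E) * E = E * (A - E).
Proof. by move=> hE hc; rewrite mulrBl mulrBr hc. Qed.

Lemma main_sec :
  ((forall A : M2s R, ~ M2unit s A -> ~ M2unit s (M2sub (M2one R) A) ->
        strongly_nil_clean s A)
   <->
   ((forall A : M2s R, ~ M2unit s A -> ~ M2unit s (M2sub (M2one R) A) ->
        strongly_J_clean s A)
    /\ J_nil R)).
Proof.
split.
- move=> H; split.
  + move=> A0 hA hIA; have [E0 [hE [hc [n hn]]]] := H A0 hA hIA.
    pose A : T := A0; pose E : T := E0.
    have hA' : ~ uni A := hA.
    have hIA' : ~ uni (1 - A) := hIA.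
    have hE' : E * E = E := hE.
    have hc' : A * E = E * A := hc.
    have hn' : (A - E) ^+ n = 0 by rewrite -powTE.
    exists E0; split => //; split => //.
    change (JJ (A - E)).
    apply: (W_nilJ hE' _ _ (comm_sub hE' hc') hn').
    * move=> h0; apply: hIA'; apply: (uni_nil (n := n)).
      by move: hn'; rewrite h0 subr0.
    * move=> h1; apply: hA'.
      have : uni (1 - (- (A - E))).
        apply: (uni_nil (n := n)); by rewrite exprNn hn' mulr0.
      by rewrite opprK h1 addrC subrK.
  + move=> x hx.
    pose A : T := mkM2 x 0 0 1.
    have hxu : (1 - x) \is a GRing.unit by have := hx 1; rewrite mul1r.
    have hA : ~ uni A by move/diag_uni; apply: J_nu hx.
    have hIA : ~ uni (1 - A).
      move=> [[y1 y2 y3 y4] [_]]; rewrite /A; m2s; rsimp; move=> [_ _ h01].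
      by have := @oner_neq0 R; rewrite -h01 eqxx.
    have [[e f g h] [hE [hc [n hn]]]] := H A hA hIA.
    move: hc; rewrite /A /M2mul /=; rsimp; move=> [_ hf hg].
    have f0 : f = 0.
      by apply: (mulrI hxu); rewrite mulrBl mul1r hf subrr mulr0.
    have g0 : g = 0.
      by apply: (mulIr hxu); rewrite mulrBr mulr1 -hg subrr mul0r.
    have hee : e * e = e.
      move: hE; rewrite f0 g0 /M2idempotent /M2mul /=; rsimp; by case=> h1 _.
    have hn' : (mkM2 (x - e) 0 0 (1 - h) : T) ^+ n = 0.
      have -> : (mkM2 (x - e) 0 0 (1 - h) : T) = M2sub A (mkM2 e f g h).
        by rewrite f0 g0 /A /M2sub /M2add /M2opp /=; rsimp.
      by rewrite -powTE.
    rewrite diagX in hn'; case: hn' => hxe _.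
    case: (idem01 hl hee) => he; move: hxe; rewrite he.
      by rewrite subr0 => hxn; exists n.
    move=> h1; exfalso; apply: (nil_nu h1).
    by rewrite -opprB unitrN.
- move=> [H hN] A0 hA hIA; have [E0 [hE [hc hJ]]] := H A0 hA hIA.
  pose A : T := A0; pose E : T := E0.
  have hA' : ~ uni A := hA.
  have hIA' : ~ uni (1 - A) := hIA.
  have hE' : E * E = E := hE.
  have hc' : A * E = E * A := hc.
  have hJ' : JJ (A - E) := hJ.
  exists E0; split => //; split => //.
  have hE0 : E <> 0.
    move=> h0; apply: hIA'; move: hJ'; rewrite h0 subr0; exact: JJ_uni'.
  have hE1 : E <> 1.
    move=> h1; apply: hA'; move: hJ'; rewrite h1 => /JJ_uni.
    by rewrite addrC subrK.
  have [n hn] := W_Jnil hE' hE0 hE1 (comm_sub hE' hc') hJ' hN.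
  by exists n; rewrite powTE.
Qed.
End M2.

Unset Implicit Arguments.

Theorem proposition2p14 (R : unitRingType) (s : R) :
  local_ring R -> central s ->
  ((forall A : M2s R, ~ M2unit s A -> ~ M2unit s (M2sub (M2one R) A) ->
        strongly_nil_clean s A)
   <->
   ((forall A : M2s R, ~ M2unit s A -> ~ M2unit s (M2sub (M2one R) A) ->
        strongly_J_clean s A)
    /\ J_nil R)).
Proof. move=> hl hs; exact: (main_sec hs hl). Qed.
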